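(* Let $X$ be a discrete metric space with bounded geometry (balls of radius $r$ have at most $v(r)<\infty$ elements) and let $Y$ be a set. If $A=(a_{y,x})_{(y,x)\in Y\times X}$ is thin-$\emptyset$, then $A^*A$ (when it exists) is banded, i.e. there is $N<\infty$ such that $(A^*A)_{x,x'}=0$ whenever $d(x,x')>N$.
   Context: $A$ is thin-$\emptyset$ if there is $r<\infty$ such that every row $(a_{y,x})_{x\in X}$ has support contained in a ball of radius $r$ in $X$; no condition is imposed on columns. *)

(* Defs.v *)
From mathcomp Require Import all_boot all_order all_algebra.
From mathcomp Require Import reals.
From mathcomp.real_closed Require Import complex.
Set Implicit Arguments. Unset Strict Implicit. Unset Printing Implicit Defensive.
Import Order.TTheory GRing.Theory Num.Theory.
Local Open Scope ring_scope.

Definition is_metric (R : realType) (X : Type) (d : X -> X -> R) : Prop :=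
  [/\ forall x y, 0 <= d x y,
      forall x y, (d x y = 0) <-> (x = y),
      forall x y, d x y = d y x &
      forall x y z, d x z <= d x y + d y z].

Definition bounded_geometry (R : realType) (X : eqType) (d : X -> X -> R) : Prop :=
  forall r : R, exists v : nat, forall (x : X) (s : seq X),
    uniq s -> (forall z, z \in s -> d x z <= r) -> (size s <= v)%N.

Definition thin_empty (R : realType) (X Y : Type) (d : X -> X -> R)
    (a : Y -> X -> R[i]) : Prop :=
  exists r : R, forall y : Y, exists c : X,
    forall x : X, a y x != 0 -> d c x <= r.

(* unconditional convergence of a family f : Y -> R[i] to s, along the net of
   finite subsets of Y *)
Definition has_sum (R : realType) (Y : eqType) (f : Y -> R[i]) (s : R[i]) : Prop :=
  forall eps : R, 0 < eps -> exists F0 : seq Y, forall F : seq Y,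
    uniq F -> {subset F0 <= F} -> `|\sum_(y <- F) f y - s| < (eps%:C)%C.

Definition is_adjoint_product (R : realType) (X Y : eqType)
    (a : Y -> X -> R[i]) (B : X -> X -> R[i]) : Prop :=
  forall x x' : X, has_sum (fun y => (a y x)^* * a y x') (B x x').

Definition banded (R : realType) (X : Type) (d : X -> X -> R)
    (B : X -> X -> R[i]) : Prop :=
  exists N : R, forall x x' : X, N < d x x' -> B x x' = 0.

(* Main.v *)
Require Import Defs.
From mathcomp Require Import all_boot all_order all_algebra.
From mathcomp Require Import reals.
From mathcomp.real_closed Require Import complex.
Import Order.TTheory GRing.Theory Num.Theory.

Theorem proposition3p2 (R : realType) (X Y : eqType) (d : X -> X -> R)
    (a : Y -> X -> R[i]) (B : X -> X -> R[i]) :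
  is_metric d -> bounded_geometry d ->
  thin_empty d a -> is_adjoint_product a B -> banded d B.
Proof.
move=> [d0 dE dC dT] _ [r Hr] HB.
exists (r + r)%R => x x' Hxx'.
have Hz : forall y, ((a y x)^* * a y x')%R = 0%R.
  move=> y; have [c Hc] := Hr y.
  case: (eqVneq (a y x) 0%R) => [->|nx]; first by rewrite ?conjc0 ?conjC0 mul0r.
  case: (eqVneq (a y x') 0%R) => [->|nx']; first by rewrite mulr0.
  have h1 := Hc _ nx; have h2 := Hc _ nx'.
  have := dT x c x'; rewrite (dC x c) => h3.
  have : (d x x' <= r + r)%R by apply: (le_trans h3); apply: lerD.
  by rewrite leNgt Hxx'.
apply/eqP; apply: contraT => nB.
have := HB x x'.
have hpos : (0 < `|B x x'|)%R by rewrite normr_gt0.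
move: hpos; rewrite normc_def ltcR => hpos.
move=> /(_ _ hpos) [F0 HF].
have hs : {subset F0 <= undup F0} by move=> z; rewrite mem_undup.
have := HF (undup F0) (undup_uniq F0) hs.
rewrite big1 ?sub0r ?normrN => [|y _]; last exact: Hz.
move=> h; move: h; rewrite normc_def ltcR; move=> h; by rewrite ltxx in h.
Qed.
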